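(* Consider one seller with one item and $n$ ex-post rational buyers $N=\{1,\dots,n\}$; the item's quality $q\in Q=[q_1,q_2]$ has CDF $G$ and density $g$ and is observed only by the seller; buyer $i$'s valuation $v_i(q)$ is monotone increasing with inverse $v_i^{-1}$. Suppose buyers may buy only after being recommended to buy, so a fixed-price signaling mechanism $(\pi,p)$ — with $\pi(q,s_i)\ge0$ for $i\in\{0,\dots,n\}$, $\sum_{i\in N}\pi(q,s_i)+\pi(q,s_0)=1$ for each $q$ — is feasible iff $\int_{q_1}^{v_i^{-1}(p)}\pi(q,s_i)g(q)\,\mathrm{d}q=0$ for all $i\in N$, and its revenue is $p\int_Q\sum_{i\in N}\pi(q,s_i)g(q)\,\mathrm{d}q$. Let $v_{min}^{-1}(p)=\min_{i\in N}v_i^{-1}(p)$, let $p^*\in\arg\max_p[1-G(v_{min}^{-1}(p))]\cdot p$, and let $j\in\arg\min_i v_i^{-1}(p^* )$. Define $\pi^*(q,s_0)=1$ and $\pi^*(q,s_i)=0$ for $i\in N$ when $q\in[q_1,v_{min}^{-1}(p^* ))$, and $\pi^*(q,s_j)=1$, $\pi^*(q,s_i)=0$ for $i\ne j$ (including $i=0$) when $q\in[v_{min}^{-1}(p^* ),q_2]$. Then $(\pi^*,p^* )$ is a revenue-optimal feasible mechanism.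
   Context: Signal $s_i$ ($i\in N$) recommends buyer $i$ to buy and others not to buy; $s_0$ recommends no buyer to buy. An ex-post rational buyer $i$ is willing to buy iff $v_i(q)\ge p$; the feasibility condition says a buyer recommended to buy is almost surely willing to buy. *)

(* Defs.v *)
From HB Require Import structures.
From mathcomp Require Import all_boot all_order all_algebra.
From mathcomp Require Import all_classical all_reals all_analysis.
Set Implicit Arguments. Unset Strict Implicit. Unset Printing Implicit Defensive.
Import Order.TTheory GRing.Theory Num.Theory.
Local Open Scope classical_set_scope.
Local Open Scope ring_scope.

Section Defs.
Variable R : realType.
Local Notation mu := (@lebesgue_measure R).

(* Quality space Q = [q1, q2]; signals: [None] = s_0 (nobody buys),
   [Some i] = s_i (buyer i recommended to buy, the others not). *)

Definition qualityCDF (q1 q2 : R) (g : R -> R) (x : R) : R :=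
  Rintegral mu (`[q1, q2] `&` `]-oo, x]) g.

Definition vmininv (n : nat) (hn : (0 < n)%N) (vinv : 'I_n -> R -> R) (p : R) : R :=
  \big[Num.min/vinv (Ordinal hn) p]_(i < n) vinv i p.

Definition signaling_scheme (n : nat) (q1 q2 : R) (pi : R -> option 'I_n -> R) : Prop :=
  (forall s, measurable_fun `[q1, q2] (fun q => pi q s)) /\
  (forall q, q \in `[q1, q2] -> forall s, 0 <= pi q s) /\
  (forall q, q \in `[q1, q2] ->
     \sum_(i < n) pi q (Some i) + pi q None = 1).

Definition feasible (n : nat) (q1 q2 : R) (g : R -> R) (vinv : 'I_n -> R -> R)
    (pi : R -> option 'I_n -> R) (p : R) : Prop :=
  signaling_scheme q1 q2 pi /\
  forall i : 'I_n,
    Rintegral mu (`[q1, q2] `&` `[q1, vinv i p]) (fun q => pi q (Some i) * g q) = 0.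

Definition revenue (n : nat) (q1 q2 : R) (g : R -> R)
    (pi : R -> option 'I_n -> R) (p : R) : R :=
  p * Rintegral mu `[q1, q2] (fun q => (\sum_(i < n) pi q (Some i)) * g q).

Definition pistar (n : nat) (hn : (0 < n)%N) (vinv : 'I_n -> R -> R) (pstar : R)
    (j : 'I_n) (q : R) (s : option 'I_n) : R :=
  if q < vmininv hn vinv pstar then (s == None)%:R else (s == Some j)%:R.

End Defs.

(* Main.v *)
Require Import Defs.
From HB Require Import structures.
From mathcomp Require Import all_boot all_order all_algebra.
From mathcomp Require Import all_classical all_reals all_analysis.
From mathcomp Require Import measurable_realfun.
Import Order.TTheory GRing.Theory Num.Theory.
Local Open Scope classical_set_scope.
Local Open Scope ring_scope.

Lemma Rint_pt0 (R : realType) (D : set R) (f : R -> R) (c : R) :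
  measurable D -> measurable_fun D f ->
  (forall x, D x -> x != c -> f x = 0) ->
  Rintegral (@lebesgue_measure R) D f = 0.
Proof.
move=> mD mf h; rewrite /Rintegral -(@integral_setD1 _ _ c).
- rewrite integral0_eq //= => x [Dx /= xc]; rewrite h //; apply/eqP => xc'; exact: xc.
- exact: measurableD.
- apply/measurable_EFinP; apply: measurable_funS mf => //; exact: subDsetl.
Qed.

Lemma Rint_split (R : realType) (D : set R) (f : R -> R) (x : R) :
  measurable D -> (@lebesgue_measure R).-integrable D (EFin \o f) ->
  Rintegral (@lebesgue_measure R) D f =
  Rintegral (@lebesgue_measure R) (D `&` `]-oo, x]) f +
  Rintegral (@lebesgue_measure R) (D `&` ~` `]-oo, x]) f.
Proof.
move=> mD fi; rewrite -Rintegral_setU //.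
- by rewrite -setIUr setUCr setIT.
- exact: measurableI.
- apply: measurableI => //; exact: measurableC.
- by rewrite -setIUr setUCr setIT.
- by apply/disj_setPS => y [[_ a] [_ b]].
Qed.

Lemma Rint_sum (R : realType) (D : set R) (I : Type) (s : seq I) (h : I -> R -> R) :
  measurable D -> (forall i, (@lebesgue_measure R).-integrable D (EFin \o h i)) ->
  Rintegral (@lebesgue_measure R) D (fun x => \sum_(i <- s) h i x) =
  \sum_(i <- s) Rintegral (@lebesgue_measure R) D (h i).
Proof.
move=> mD hi; elim: s => [|a s ih].
  rewrite big_nil; under eq_Rintegral do rewrite big_nil.
  by rewrite Rintegral_cst // mul0r.
rewrite big_cons -ih -RintegralD //.
  by apply: eq_Rintegral => y _; rewrite big_cons.
have -> : (EFin \o (fun x => \sum_(i <- s) h i x)) = (fun x => \sum_(i <- s) (EFin \o h i) x).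
  by apply/funext => y /=; rewrite sumEFin.
by apply: integrable_sum.
Qed.

Lemma Rint_subset (R : realType) (A B : set R) (f : R -> R) :
  measurable A -> measurable B -> A `<=` B ->
  (@lebesgue_measure R).-integrable B (EFin \o f) ->
  (forall x, B x -> 0 <= f x) ->
  Rintegral (@lebesgue_measure R) A f <= Rintegral (@lebesgue_measure R) B f.
Proof.
move=> mA mB AB fi f0; rewrite /Rintegral fine_le //.
- apply: integrable_fin_num => //; exact: integrableS fi.
- exact: integrable_fin_num.
- apply: ge0_subset_integral => //.
  by case/integrableP: fi.
Qed.

Lemma vmin_le (R : realType) n (hn : (0 < n)%N) (vinv : 'I_n -> R -> R) p i :
  vmininv hn vinv p <= vinv i p.
Proof.
rewrite /vmininv.
have : i \in index_enum 'I_n by rewrite mem_index_enum.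
elim: (index_enum 'I_n) => [//|a s ih].
rewrite inE big_cons => /orP[/eqP <-|/ih h]; rewrite ge_min ?lexx //.
by rewrite h orbT.
Qed.

Lemma le_vmin (R : realType) n (hn : (0 < n)%N) (vinv : 'I_n -> R -> R) p y :
  (forall i, y <= vinv i p) -> y <= vmininv hn vinv p.
Proof.
move=> h; rewrite /vmininv; apply: (big_ind (fun x => y <= x)) => //.
by move=> a b ya yb; rewrite le_min ya yb.
Qed.

Lemma int_hg (R : realType) (D : set R) (g h : R -> R) :
  measurable D -> measurable_fun D h ->
  (forall x, D x -> 0 <= g x) ->
  (@lebesgue_measure R).-integrable D (EFin \o g) ->
  (forall x, D x -> 0 <= h x <= 1) ->
  (@lebesgue_measure R).-integrable D (EFin \o (fun x => h x * g x)).
Proof.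
move=> mD mh g0 gi h01; have gi' := gi.
apply: le_integrable gi'; first exact: mD.
  apply/measurable_EFinP; apply: measurable_funM => //.
  by case/integrableP: gi => /measurable_EFinP.
move=> x Dx /=; rewrite lee_fin normrM.
have /andP[h0 h1] := h01 x Dx.
rewrite (ger0_norm h0) ler_piMl //.
Qed.

Lemma sum_pistar (R : realType) n (hn : (0 < n)%N) (vinv : 'I_n -> R -> R) pstar j q :
  \sum_(i < n) pistar hn vinv pstar j q (Some i) =
  if q < vmininv hn vinv pstar then 0 else 1.
Proof.
rewrite /pistar; case: ifP => _.
  by rewrite big1.
rewrite (bigD1 j) //= eqxx big1 ?addr0 // => i /negPf ij /=.
have -> : (Some i == Some j) = (i == j) by apply/eqP/eqP => [[]|->].
by rewrite ij.
Qed.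
Theorem mainTheorem9 (R : realType) (n : nat) (hn : (0 < n)%N)
    (q1 q2 : R) (hq : q1 < q2)
    (g : R -> R)
    (hg_meas : measurable_fun `[q1, q2] g)
    (hg_nneg : forall q, q \in `[q1, q2] -> 0 <= g q)
    (hg_int : (\int[@lebesgue_measure R]_(q in `[q1, q2]) (g q)%:E = 1)%E)
    (v vinv : 'I_n -> R -> R)
    (hv_mono : forall i, {homo v i : x y / x < y})
    (hv_inv1 : forall i, cancel (v i) (vinv i))
    (hv_inv2 : forall i, cancel (vinv i) (v i))
    (pstar : R)
    (hpstar : forall p : R,
        (1 - qualityCDF q1 q2 g (vmininv hn vinv p)) * p
        <= (1 - qualityCDF q1 q2 g (vmininv hn vinv pstar)) * pstar)
    (j : 'I_n)
    (hj : forall i : 'I_n, vinv j pstar <= vinv i pstar) :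
  feasible q1 q2 g vinv (pistar hn vinv pstar j) pstar /\
  forall (pi : R -> option 'I_n -> R) (p : R),
    feasible q1 q2 g vinv pi p ->
    revenue q1 q2 g pi p <= revenue q1 q2 g (pistar hn vinv pstar j) pstar.
Proof.
set mu := @lebesgue_measure R.
set c := vmininv hn vinv pstar.
have hjc : vinv j pstar <= c by apply: le_vmin.
have mQ : measurable (`[q1, q2] : set R) by exact: measurable_itv.
have gi : mu.-integrable `[q1, q2] (EFin \o g).
  apply/integrableP; split; first exact/measurable_EFinP.
  have -> : (\int[mu]_(x in `[q1, q2]) `|(EFin \o g) x| = \int[mu]_(x in `[q1, q2]) (g x)%:E)%E.
    apply: eq_integral => x /[!inE] Qx /=; rewrite ger0_norm // hg_nneg //.
  by rewrite hg_int ltry.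
have Q1 : Rintegral mu `[q1, q2] g = 1 by rewrite /Rintegral hg_int.
have G1 : forall x, 1 - qualityCDF q1 q2 g x =
    Rintegral mu (`[q1, q2] `&` ~` `]-oo, x]) g.
  move=> x; rewrite /qualityCDF -Q1 (Rint_split _ `[q1, q2] _ x) // addrC addKr //.
have mpi : forall s D, measurable D ->
    measurable_fun D (fun q => pistar hn vinv pstar j q s).
  move=> s D mD; rewrite /pistar; apply: measurable_fun_if => //.
  exact: measurable_fun_ltr.
have hsum := @sum_pistar R n hn vinv pstar j.
split.
  split.
    split; first by move=> s; exact: mpi.
    split.
      by move=> q _ s; rewrite /pistar; case: ifP => _; exact: ler0n.
    move=> q _; rewrite hsum /pistar -/c; case: ifP => _ /=.
      by rewrite add0r.
    by rewrite addr0.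
  move=> i; apply: (Rint_pt0 _ _ _ c).
  - apply: measurableI => //; exact: measurable_itv.
  - apply: measurable_funM; first by apply: mpi; apply: measurableI => //; exact: measurable_itv.
    apply: measurable_funS hg_meas => //; exact: subIsetl.
  - move=> x [Qx Ix] xc; rewrite /pistar -/c; case: ifP => [_|/negbT]; first by rewrite /= mul0r.
    rewrite -leNgt => cx.
    move: Ix; rewrite /= in_itv /= => /andP[_ xi].
    case eij: (i == j).
      move/eqP: eij => eij; subst i.
      by move: xc; rewrite eq_le cx (le_trans xi hjc).
    have -> : (Some i == Some j) = (i == j) by apply/eqP/eqP => [[]|->].
    by rewrite eij mul0r.
have mif : forall D, measurable D ->
    measurable_fun D (fun q : R => if q < c then (0:R) else 1).
  move=> D mD; apply: measurable_fun_if => //; exact: measurable_fun_ltr.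
have Rstar : revenue q1 q2 g (pistar hn vinv pstar j) pstar =
    pstar * (1 - qualityCDF q1 q2 g c).
  rewrite /revenue G1; congr (_ * _).
  under eq_Rintegral => x _ do rewrite hsum -/c.
  have ii : mu.-integrable `[q1, q2] (EFin \o (fun x => (if x < c then 0 else 1) * g x)).
    apply: int_hg => //.
    - exact: mif.
    - by move=> x _; case: ifP => _; rewrite ?lexx ?ler01.
  rewrite (Rint_split _ `[q1, q2] _ c) //.
  rewrite (Rint_pt0 _ _ _ c) ?add0r //.
  - apply: eq_Rintegral => x /set_mem [_ xc].
    have -> : (x < c) = false.
      apply/negbTE; apply/negP => xc'; apply: xc.
      by rewrite /= in_itv /= ltW.
    by rewrite mul1r.
  - apply: measurableI => //; exact: measurable_itv.
  - apply: measurable_funM; first by apply: mif; apply: measurableI => //; exact: measurable_itv.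
    apply: measurable_funS hg_meas => //; exact: subIsetl.
  - move=> x [_ xc'] xc; move: xc'; rewrite /= in_itv /= => xc'.
    by rewrite ifT ?mul0r // lt_neqAle xc xc'.
move=> pi p [[mpi' [pi0 pi1]] hfeas].
set m := vmininv hn vinv p.
have hm : forall i, m <= vinv i p by move=> i; exact: vmin_le.
have pile1 : forall q, q \in `[q1, q2] -> forall i, pi q (Some i) <= 1.
  move=> q Qq i; rewrite -(pi1 q Qq) (bigD1 i) //= -addrA lerDl.
  by apply: addr_ge0; [apply: sumr_ge0 => k _|]; exact: pi0.
have Sle : forall q, q \in `[q1, q2] -> 0 <= \sum_(i < n) pi q (Some i) <= 1.
  move=> q Qq; apply/andP; split; first by apply: sumr_ge0 => k _; exact: pi0.
  by rewrite -(pi1 q Qq) lerDl pi0.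
have hi : forall i, mu.-integrable `[q1, q2] (EFin \o (fun q => pi q (Some i) * g q)).
  move=> i; apply: int_hg => //.
  by move=> x Qx; rewrite pi0 ?pile1.
set U := `[q1, q2] `&` ~` `]-oo, m].
have mU : measurable U.
  by apply: measurableI => //; apply: measurableC; exact: measurable_itv.
have UQ : U `<=` `[q1, q2] by exact: subIsetl.
have hiU : forall i, mu.-integrable U (EFin \o (fun q => pi q (Some i) * g q)).
  by move=> i; apply: integrableS (hi i).
have I_le : Rintegral mu `[q1, q2] (fun q => \sum_(i < n) pi q (Some i) * g q)
    <= Rintegral mu U g.
  rewrite Rint_sum //.
  apply: (@le_trans _ _ (\sum_(i < n) Rintegral mu U (fun q => pi q (Some i) * g q))).
    apply: ler_sum => i _.
    rewrite (Rint_split _ `[q1, q2] _ (vinv i p)) //.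
    have -> : `[q1, q2] `&` `]-oo, vinv i p] = `[q1, q2] `&` `[q1, vinv i p].
      apply/seteqP; split => x [Qx h]; split => //; move: Qx h;
        rewrite /= !in_itv /= => /andP[h1 h2].
        by move=> h3; rewrite h1 h3.
      by case/andP.
    rewrite hfeas add0r.
    apply: Rint_subset => //.
    - apply: measurableI => //; apply: measurableC; exact: measurable_itv.
    - move=> x [Qx nx]; split => // xm; apply: nx; move: xm.
      rewrite /= !in_itv /= => xm; exact: le_trans xm (hm i).
    - by move=> x Ux; rewrite mulr_ge0 // ?pi0 // ?hg_nneg //; apply: UQ.
  rewrite -Rint_sum //.
  apply: le_Rintegral => //.
  - have -> : (EFin \o (fun x => \sum_(i < n) pi x (Some i) * g x)) =
        (fun x => \sum_(i < n) (EFin \o (fun q => pi q (Some i) * g q)) x).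
      by apply/funext => y /=; rewrite sumEFin.
    by apply: integrable_sum.
  - exact: integrableS gi.
  - move=> x Ux; have Qx := UQ x Ux.
    rewrite -mulr_suml ler_piMl //; first exact: hg_nneg.
    by case/andP: (Sle x Qx).
rewrite Rstar /revenue.
set I := Rintegral _ _ _.
have I0 : 0 <= I.
  apply: Rintegral_ge0 => x Qx; apply: mulr_ge0; last exact: hg_nneg.
  by case/andP: (Sle x Qx).
have IU : I <= 1 - qualityCDF q1 q2 g m.
  rewrite G1 /I; under eq_Rintegral => q _ do rewrite mulr_suml.
  exact: I_le.
have hp := hpstar p; have h0 := hpstar 0; rewrite mulr0 in h0.
rewrite -/c in hp h0.
have [p0|p0] := leP p 0.
  apply: (@le_trans _ _ 0); first exact: mulr_le0_ge0.
  by rewrite mulrC.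
apply: (@le_trans _ _ (p * (1 - qualityCDF q1 q2 g m))).
  by apply: ler_wpM2l => //; exact: ltW.
by rewrite mulrC [pstar * _]mulrC.
Qed.
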